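(* Let $x,y,z:(-\infty,0]\to[0,\infty)$ be absolutely continuous functions with $x+y+z>0$ everywhere, $\liminf_{s\to-\infty}y(s)=0$, and, for some $\varepsilon>0$, $$|x'|\le\varepsilon(x+y+z),\qquad y'+y\le\varepsilon(x+z),\qquad z'-z\ge-\varepsilon(x+y).$$ There exist $\varepsilon_0>0$ and $c>0$ such that if $\varepsilon\le\varepsilon_0$, then $y\le2\varepsilon(x+z)$ on $(-\infty,0]$, and moreover one of the following holds: either there exists $s_*\in(-\infty,0]$ with $z\le8\varepsilon x$ on $(-\infty,s_*]$, or $x\le c\varepsilon z$ on $(-\infty,0]$. *)

(* Defs.v *)
From Stdlib Require Import Reals.
Open Scope R_scope.

Fixpoint rsum (f : nat -> R) (n : nat) : R :=
  match n with
  | O => 0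
  | S k => rsum f k + f k
  end.

Definition null_set (N : R -> Prop) : Prop :=
  forall eps, 0 < eps ->
    exists a b : nat -> R,
      (forall n, a n <= b n) /\
      (forall t, N t -> exists n, a n < t < b n) /\
      (forall m, rsum (fun n => b n - a n) m <= eps).

(* Absolute continuity of f on the compact interval [a,b] (Vitali's
   definition, finitely many non-overlapping subintervals listed in order). *)
Definition abs_continuous_on (f : R -> R) (a b : R) : Prop :=
  forall eps, 0 < eps -> exists delta, 0 < delta /\
    forall (n : nat) (u v : nat -> R),
      (forall i, (i < n)%nat -> a <= u i /\ u i <= v i /\ v i <= b) ->
      (forall i, (S i < n)%nat -> v i <= u (S i)) ->
      rsum (fun i => v i - u i) n < delta ->
      rsum (fun i => Rabs (f (v i) - f (u i))) n < eps.

Definition abs_continuous_nonpos (f : R -> R) : Prop :=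
  forall a b, a <= b -> b <= 0 -> abs_continuous_on f a b.

Definition liminf_minfty (f : R -> R) (l : R) : Prop :=
  (forall eps, 0 < eps -> forall M, exists s, s <= M /\ f s < l + eps) /\
  (forall eps, 0 < eps -> exists M, forall s, s <= M -> l - eps < f s).

(* Main.v *)
Require Import Defs.
From Stdlib Require Import Reals Lra Lia Psatz Classical.
Open Scope R_scope.

Lemma rsum_ext f g n : (forall i, (i < n)%nat -> f i = g i) -> rsum f n = rsum g n.
Proof. induction n; simpl; intros H; [reflexivity|]. rewrite IHn by (intros; apply H; lia). rewrite H by lia. reflexivity. Qed.

Lemma rsum_le f g n : (forall i, (i < n)%nat -> f i <= g i) -> rsum f n <= rsum g n.
Proof. induction n; simpl; intros H; [lra|]. assert (H1 := H n ltac:(lia)). assert (rsum f n <= rsum g n) by (apply IHn; intros; apply H; lia). lra. Qed.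

Lemma rsum_nonneg f n : (forall i, (i < n)%nat -> 0 <= f i) -> 0 <= rsum f n.
Proof. induction n; simpl; intros H; [lra|]. assert (0 <= rsum f n) by (apply IHn; intros; apply H; lia). assert (0 <= f n) by (apply H; lia). lra. Qed.

Lemma rsum_plus f g n : rsum (fun i => f i + g i) n = rsum f n + rsum g n.
Proof. induction n; simpl; lra. Qed.

Lemma rsum_scal c f n : rsum (fun i => c * f i) n = c * rsum f n.
Proof. induction n; simpl; [lra|]. rewrite IHn. ring. Qed.

Lemma rsum_minus f g n : rsum (fun i => f i - g i) n = rsum f n - rsum g n.
Proof. induction n; simpl; lra. Qed.

Lemma rsum_ge_term f n k : (forall i, (i < n)%nat -> 0 <= f i) -> (k < n)%nat -> f k <= rsum f n.
Proof. induction n; intros H Hk; [lia|]. simpl. assert (0 <= rsum f n) by (apply rsum_nonneg; intros; apply H; lia).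
 destruct (Nat.eq_dec k n). subst. lra. assert (f k <= rsum f n) by (apply IHn; [intros; apply H; lia| lia]). assert (0 <= f n) by (apply H; lia). lra. Qed.

Lemma rsum_mono_n f n m : (forall i, 0 <= f i) -> (n <= m)%nat -> rsum f n <= rsum f m.
Proof. intros H Hnm. induction Hnm; [lra|]. simpl. specialize (H m). lra. Qed.

Lemma rsum_one f : rsum f 1 = f 0%nat.
Proof. simpl. lra. Qed.

Lemma AC_ext f g a b : (forall t, a <= t <= b -> f t = g t) -> abs_continuous_on f a b -> abs_continuous_on g a b.
Proof.
  intros Hfg H eps Heps. destruct (H eps Heps) as [d [Hd Hd']]. exists d; split; auto.
  intros n u v H1 H2 H3. specialize (Hd' n u v H1 H2 H3).
  rewrite (rsum_ext _ (fun i => Rabs (f (v i) - f (u i)))); auto.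
  intros i Hi. destruct (H1 i Hi) as [? [? ?]]. rewrite !Hfg by lra. reflexivity.
Qed.

Lemma AC_lin f g al be a b : abs_continuous_on f a b -> abs_continuous_on g a b ->
  abs_continuous_on (fun t => al * f t + be * g t) a b.
Proof.
  intros Hf Hg eps Heps.
  set (c1 := Rabs al + 1). set (c2 := Rabs be + 1).
  assert (0 < c1) by (unfold c1; pose proof (Rabs_pos al); lra).
  assert (0 < c2) by (unfold c2; pose proof (Rabs_pos be); lra).
  destruct (Hf (eps / (2 * c1))) as [d1 [Hd1 Hd1']]. apply Rdiv_lt_0_compat; lra.
  destruct (Hg (eps / (2 * c2))) as [d2 [Hd2 Hd2']]. apply Rdiv_lt_0_compat; lra.
  exists (Rmin d1 d2). split. apply Rmin_pos; auto.
  intros n u v H1 H2 H3.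
  assert (A1 := Hd1' n u v H1 H2 ltac:(pose proof (Rmin_l d1 d2); lra)).
  assert (A2 := Hd2' n u v H1 H2 ltac:(pose proof (Rmin_r d1 d2); lra)).
  set (X := rsum (fun i => Rabs (f (v i) - f (u i))) n) in *.
  set (Y := rsum (fun i => Rabs (g (v i) - g (u i))) n) in *.
  assert (0 <= X) by (apply rsum_nonneg; intros; apply Rabs_pos).
  assert (0 <= Y) by (apply rsum_nonneg; intros; apply Rabs_pos).
  apply Rle_lt_trans with (c1 * X + c2 * Y).
  - unfold X, Y. rewrite <- !rsum_scal, <- rsum_plus. apply rsum_le. intros i _.
    replace (al * f (v i) + be * g (v i) - (al * f (u i) + be * g (u i))) with
      (al * (f (v i) - f (u i)) + be * (g (v i) - g (u i))) by ring.
    eapply Rle_trans. apply Rabs_triang. rewrite !Rabs_mult.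
    pose proof (Rabs_pos (f (v i) - f (u i))). pose proof (Rabs_pos (g (v i) - g (u i))).
    unfold c1, c2. nra.
  - assert (c1 * X < eps / 2). { apply Rlt_le_trans with (c1 * (eps / (2 * c1))). apply Rmult_lt_compat_l; auto. right; field; lra. }
    assert (c2 * Y < eps / 2). { apply Rlt_le_trans with (c2 * (eps / (2 * c2))). apply Rmult_lt_compat_l; auto. right; field; lra. }
    lra.
Qed.

Lemma AC_bounded f a b : a <= b -> abs_continuous_on f a b -> exists F, 0 <= F /\ forall t, a <= t <= b -> Rabs (f t) <= F.
Proof.
  intros Hab H. destruct (H 1 ltac:(lra)) as [d [Hd Hd']].
  assert (Hn : forall n : nat, forall t, a <= t <= b -> t <= a + INR n * (d/2) -> Rabs (f t - f a) <= INR n).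
  { induction n; intros t Ht Htn.
    - simpl in Htn. replace t with a by lra. rewrite Rminus_diag, Rabs_R0. simpl; lra.
    - rewrite S_INR in *. destruct (Rle_dec t (a + INR n * (d/2))) as [Hle|Hgt].
      + specialize (IHn t Ht Hle). lra.
      + apply Rnot_le_lt in Hgt. set (t' := a + INR n * (d/2)).
        assert (0 <= INR n) by apply pos_INR.
        assert (a <= t' <= b) by (unfold t'; split; nra).
        specialize (IHn t' H1 ltac:(unfold t'; lra)).
        assert (Rabs (f t - f t') < 1).
        { specialize (Hd' 1%nat (fun _ => t') (fun _ => t)). rewrite !rsum_one in Hd'. apply Hd'.
          - intros i Hi. unfold t' in *; lra.
          - intros i Hi; lia.
          - unfold t' in *. lra. }
        replace (f t - f a) with ((f t - f t') + (f t' - f a)) by ring.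
        eapply Rle_trans. apply Rabs_triang. lra. }
  destruct (archimed ((b - a) / (d / 2))) as [Hup _].
  assert (0 <= up ((b - a) / (d / 2)))%Z.
  { apply le_IZR. assert (0 <= (b-a)/(d/2)) by (unfold Rdiv; apply Rmult_le_pos; [lra | left; apply Rinv_0_lt_compat; lra]). lra. }
  destruct (IZN _ H0) as [n Hn'].
  exists (Rabs (f a) + INR n). split. pose proof (pos_INR n); pose proof (Rabs_pos (f a)); lra.
  intros t Ht. assert (Rabs (f t - f a) <= INR n).
  { apply Hn; auto. assert (Hz : IZR (up ((b - a) / (d / 2))) = INR n) by (rewrite Hn', INR_IZR_INZ; reflexivity).
    assert ((b - a) / (d/2) * (d/2) = b - a) by (field; lra).
    assert (b - a <= IZR (up ((b - a) / (d / 2))) * (d/2)) by nra. rewrite Hz in *. lra. }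
  replace (f t) with ((f t - f a) + f a) by ring. eapply Rle_trans. apply Rabs_triang. lra.
Qed.

Lemma AC_mul f h a b H Lh : a <= b -> abs_continuous_on f a b -> 0 <= H -> 0 <= Lh ->
  (forall t, a <= t <= b -> Rabs (h t) <= H) ->
  (forall u v, a <= u <= b -> a <= v <= b -> Rabs (h v - h u) <= Lh * Rabs (v - u)) ->
  abs_continuous_on (fun t => h t * f t) a b.
Proof.
  intros Hab Hf HH HL Hb Hl eps Heps.
  destruct (AC_bounded f a b Hab Hf) as [F [HF HFb]].
  destruct (Hf (eps / (2 * (H + 1)))) as [d1 [Hd1 Hd1']]. apply Rdiv_lt_0_compat; lra.
  set (c := F * Lh + 1). assert (0 <= F * Lh) by nra.
  exists (Rmin d1 (eps / (2 * c))). split. apply Rmin_pos; auto. apply Rdiv_lt_0_compat; unfold c; lra.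
  intros n u v H1 H2 H3.
  assert (A1 := Hd1' n u v H1 H2 ltac:(pose proof (Rmin_l d1 (eps / (2*c))); lra)).
  assert (A2 : rsum (fun i => v i - u i) n < eps / (2 * c)) by (pose proof (Rmin_r d1 (eps / (2*c))); lra).
  set (X := rsum (fun i => Rabs (f (v i) - f (u i))) n) in *.
  set (Y := rsum (fun i => v i - u i) n) in *.
  assert (0 <= X) by (apply rsum_nonneg; intros; apply Rabs_pos).
  assert (0 <= Y) by (apply rsum_nonneg; intros i Hi; destruct (H1 i Hi); lra).
  apply Rle_lt_trans with (H * X + (F * Lh) * Y).
  - unfold X, Y. rewrite <- !rsum_scal, <- rsum_plus. apply rsum_le. intros i Hi.
    destruct (H1 i Hi) as [? [? ?]].
    replace (h (v i) * f (v i) - h (u i) * f (u i)) with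
      (h (v i) * (f (v i) - f (u i)) + f (u i) * (h (v i) - h (u i))) by ring.
    eapply Rle_trans. apply Rabs_triang. rewrite !Rabs_mult.
    assert (Rabs (h (v i)) <= H) by (apply Hb; lra).
    assert (Rabs (f (u i)) <= F) by (apply HFb; lra).
    assert (Rabs (h (v i) - h (u i)) <= Lh * (v i - u i)).
    { rewrite <- (Rabs_right (v i - u i)) by lra. apply Hl; lra. }
    pose proof (Rabs_pos (f (v i) - f (u i))). pose proof (Rabs_pos (f (u i))).
    pose proof (Rabs_pos (h (v i) - h (u i))). pose proof (Rabs_pos (h (v i))).
    apply Rplus_le_compat. apply Rmult_le_compat_r; lra.
    apply Rle_trans with (F * Rabs (h (v i) - h (u i))). apply Rmult_le_compat_r; lra.
    replace (F * Lh * (v i - u i)) with (F * (Lh * (v i - u i))) by ring. apply Rmult_le_compat_l; lra.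
  - assert (H * X < eps / 2).
    { apply Rle_lt_trans with ((H+1) * X). nra. apply Rlt_le_trans with ((H+1) * (eps / (2 * (H+1)))). apply Rmult_lt_compat_l; lra. right; field; lra. }
    assert ((F * Lh) * Y < eps / 2).
    { apply Rle_lt_trans with (c * Y). unfold c; nra. apply Rlt_le_trans with (c * (eps / (2 * c))). apply Rmult_lt_compat_l; unfold c in *; lra. right; field; unfold c; lra. }
    lra.
Qed.

Lemma dpl_ext f g x l : (forall t, f t = g t) -> derivable_pt_lim f x l -> derivable_pt_lim g x l.
Proof. intros H D eps He. destruct (D eps He) as [d Hd]. exists d. intros h Hh1 Hh2. rewrite <- !H. auto. Qed.

Lemma dpl_lin f g x l1 l2 al be : derivable_pt_lim f x l1 -> derivable_pt_lim g x l2 ->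
  derivable_pt_lim (fun t => al * f t + be * g t) x (al * l1 + be * l2).
Proof.
  intros D1 D2. apply derivable_pt_lim_plus; apply derivable_pt_lim_scal; auto.
Qed.

Lemma dpl_expk k x : derivable_pt_lim (fun t => exp (k * t)) x (k * exp (k * x)).
Proof.
  assert (D1 : derivable_pt_lim (mult_real_fct k id) x (k * 1)) by (apply derivable_pt_lim_scal, derivable_pt_lim_id).
  assert (D := derivable_pt_lim_comp _ exp x _ _ D1 (derivable_pt_lim_exp _)).
  eapply dpl_ext; [| replace (k * exp (k * x)) with (exp (mult_real_fct k id x) * (k * 1)) ; [exact D|] ].
  - intros t. reflexivity.
  - unfold mult_real_fct, id. ring.
Qed.

Lemma exp_le_mono u v : u <= v -> exp u <= exp v.
Proof. intros [H|H]. left; apply exp_increasing; auto. subst; lra. Qed.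

Lemma AC_expmul f k a b : a <= b -> abs_continuous_on f a b ->
  abs_continuous_on (fun t => exp (k * t) * f t) a b.
Proof.
  intros Hab Hf. set (E := exp (Rabs k * (Rabs a + Rabs b))).
  assert (HE : forall t, a <= t <= b -> exp (k * t) <= E).
  { intros t Ht. apply exp_le_mono. 
    assert (Rabs t <= Rabs a + Rabs b).
    { unfold Rabs; repeat destruct Rcase_abs; lra. }
    apply Rle_trans with (Rabs k * Rabs t). rewrite <- Rabs_mult. apply RRle_abs.
    apply Rmult_le_compat_l; auto; apply Rabs_pos. }
  assert (0 < E) by apply exp_pos.
  apply (AC_mul f (fun t => exp (k * t)) a b E (Rabs k * E)); auto; try lra.
  - apply Rmult_le_pos; [apply Rabs_pos|lra].
  - intros t Ht. rewrite Rabs_right. auto. left; apply exp_pos.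
  - intros u v Hu Hv.
    destruct (MVT_abs (fun t => exp (k * t)) (fun t => k * exp (k * t)) u v) as [c [Hc Hc2]].
    + intros c _. apply dpl_expk.
    + rewrite Hc. apply Rmult_le_compat_r. apply Rabs_pos. rewrite Rabs_mult.
      apply Rmult_le_compat_l. apply Rabs_pos. rewrite Rabs_right by (left; apply exp_pos).
      apply HE. unfold Rmin, Rmax in Hc2. destruct Rle_dec; lra.
Qed.

Lemma RI (P : R -> Prop) a b : a <= b -> P a ->
  (forall t, a <= t <= b -> exists rho, 0 < rho /\ forall p q, a <= p -> p <= t -> t <= q -> q <= b ->
      t - rho < p -> q < t + rho -> P p -> P q) -> P b.
Proof.
  intros Hab Pa Hst.
  set (E := fun t => a <= t <= b /\ P t).
  assert (Hb : bound E) by (exists b; intros t [Ht _]; lra).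
  assert (Hne : exists t, E t) by (exists a; split; [lra|auto]).
  destruct (completeness E Hb Hne) as [T [HT1 HT2]].
  assert (HaT : a <= T) by (apply HT1; split; [lra|auto]).
  assert (HTb : T <= b) by (apply HT2; intros t [Ht _]; lra).
  destruct (Hst T ltac:(lra)) as [rho [Hrho Hr]].
  assert (Hp : exists p, E p /\ T - rho < p).
  { apply NNPP; intro Hc. assert (T <= T - rho); [|lra].
    apply HT2. intros t Et. apply Rnot_lt_le. intro Hlt. apply Hc. exists t; auto. }
  destruct Hp as [p [[Hp1 Hp2] Hp3]].
  assert (HpT : p <= T) by (apply HT1; split; auto).
  set (q := Rmin b (T + rho / 2)).
  assert (Hq1 : T <= q) by (unfold q, Rmin; destruct Rle_dec; lra).
  assert (Hq2 : q <= b) by (unfold q; apply Rmin_l).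
  assert (Pq : P q) by (apply (Hr p q); try lra; auto; unfold q, Rmin; destruct Rle_dec; lra).
  assert (q <= T) by (apply HT1; split; [lra|auto]).
  assert (q = b).
  { unfold q in *. unfold Rmin in *. destruct Rle_dec; lra. }
  rewrite <- H0; auto.
Qed.

Lemma deriv_local f t d eps : derivable_pt_lim f t d -> 0 < eps ->
  exists rho, 0 < rho /\ forall y, Rabs (y - t) < rho -> Rabs (f y - f t - d * (y - t)) <= eps * Rabs (y - t).
Proof.
  intros D He. destruct (D eps He) as [[rho Hr] Hd]. exists rho; split; auto.
  intros y Hy. destruct (Req_dec y t) as [->|Hne].
  - replace (t - t) with 0 by ring. rewrite Rabs_R0. replace (f t - f t - d * 0) with 0 by ring. rewrite Rabs_R0; lra.
  - assert (Hh : y - t <> 0) by lra. specialize (Hd (y - t) Hh Hy). simpl in Hd.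
    replace (t + (y - t)) with y in Hd by ring.
    replace (f y - f t - d * (y - t)) with ((y - t) * ((f y - f t) / (y - t) - d)) by (field; auto).
    rewrite Rabs_mult. rewrite Rmult_comm. apply Rmult_le_compat_r. apply Rabs_pos. lra.
Qed.

Lemma abs_split x y : Rabs x <= y -> - y <= x <= y.
Proof. unfold Rabs; destruct Rcase_abs; lra. Qed.

Lemma abs_lt_split x y : Rabs x < y -> - y < x < y.
Proof. unfold Rabs; destruct Rcase_abs; lra. Qed.

Definition ell (al be : nat -> R) n t := Rmin (Rmax (t - al n) 0) (be n - al n).
Definition Phi al be K t := rsum (fun n => ell al be n t) K.

Lemma ell_nonneg al be n t : al n <= be n -> 0 <= ell al be n t.
Proof. intros H; unfold ell, Rmin, Rmax; repeat destruct Rle_dec; lra. Qed.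
Lemma ell_mono al be n t t' : t <= t' -> ell al be n t <= ell al be n t'.
Proof. intros H; unfold ell, Rmin, Rmax; repeat destruct Rle_dec; lra. Qed.
Lemma ell_le al be n t : al n <= be n -> ell al be n t <= be n - al n.
Proof. intros H; unfold ell, Rmin, Rmax; repeat destruct Rle_dec; lra. Qed.
Lemma ell_in al be n t : al n <= t <= be n -> ell al be n t = t - al n.
Proof. intros H; unfold ell, Rmin, Rmax; repeat destruct Rle_dec; lra. Qed.

Lemma Phi_mono_t al be K t t' : t <= t' -> Phi al be K t <= Phi al be K t'.
Proof. intros H; unfold Phi; apply rsum_le; intros; apply ell_mono; auto. Qed.

Lemma Phi_jump al be K n p q : (forall n, al n <= be n) -> al n < p -> p <= q -> q < be n ->
  Phi al be K p + (q - p) <= Phi al be (Nat.max K (S n)) q.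
Proof.
  intros Hab H1 H2 H3. unfold Phi.
  set (K' := Nat.max K (S n)).
  assert (rsum (fun m => ell al be m p) K <= rsum (fun m => ell al be m p) K').
  { apply rsum_mono_n. intros; apply ell_nonneg; auto. unfold K'; lia. }
  assert (ell al be n q - ell al be n p <= rsum (fun m => ell al be m q - ell al be m p) K').
  { apply (rsum_ge_term (fun m => ell al be m q - ell al be m p)).
    intros i _. pose proof (ell_mono al be i p q H2). lra. unfold K'; lia. }
  rewrite rsum_minus in H0. rewrite (ell_in al be n q), (ell_in al be n p) in H0 by lra. lra.
Qed.

Lemma GFL f N a b L0 L' L : a <= b -> abs_continuous_on f a b -> null_set N ->
  L0 < L' -> L' < L -> L0 < f a ->
  (forall t, a <= t <= b -> ~ N t -> exists d, derivable_pt_lim f t d /\ (L0 < f t -> f t < L -> 0 <= d)) ->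
  Rmin (f a) L' <= f b.
Proof.
  intros Hab Hac HN H0' H1' H2' Hder.
  set (M := Rmin (f a) L').
  assert (HM : L0 < M) by (unfold M, Rmin; destruct Rle_dec; lra).
  assert (HMa : M <= f a) by apply Rmin_l.
  assert (HML : M <= L') by apply Rmin_r.
  assert (Claim : forall eta, 0 < eta -> eta * (b - a + 1) < (M - L0) / 2 -> M - eta * (b - a + 1) < f b).
  { intros eta Heta Hsmall.
    destruct (Hac eta Heta) as [delta [Hdel Hac']].
    destruct (HN (delta / 2) ltac:(lra)) as [al [be [Hab' [Hcov Hsum]]]].
    assert (HPhi : forall K t, Phi al be K t <= delta / 2).
    { intros K t. eapply Rle_trans; [|apply (Hsum K)]. unfold Phi. apply rsum_le. intros; apply ell_le; auto. }
    set (gap := (M - L0) / 2).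
    set (Inv := fun t => a <= t <= b /\ exists m u v K,
       (forall i, (i < m)%nat -> a <= u i /\ u i <= v i /\ v i <= t) /\
       (forall i, (S i < m)%nat -> v i <= u (S i)) /\
       rsum (fun i => v i - u i) m <= Phi al be K t /\
       M - eta * (t - a) - rsum (fun i => Rabs (f (v i) - f (u i))) m <= f t).
    assert (Inv_val : forall t, Inv t -> M - eta * (b - a + 1) < f t).
    { intros t [Ht [m [u [v [K [I1 [I2 [I3 I4]]]]]]]].
      assert (rsum (fun i => Rabs (f (v i) - f (u i))) m < eta).
      { apply Hac'. intros i Hi; destruct (I1 i Hi) as [? [? ?]]; repeat split; lra. auto.
        pose proof (HPhi K t); lra. }
      assert (eta * (t - a) <= eta * (b - a)) by (apply Rmult_le_compat_l; lra). lra. }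
    assert (Inv_gap : forall t, Inv t -> L0 + gap < f t).
    { intros t Ht. apply Inv_val in Ht. unfold gap; lra. }
    assert (Inv_a : Inv a).
    { split. lra. exists 0%nat, (fun _ => 0), (fun _ => 0), 0%nat. simpl. repeat split; try (intros; lia).
      unfold Phi; simpl; lra. replace (eta * (a - a)) with 0 by ring. lra. }
    assert (Jump : forall n p q, Inv p -> p <= q -> q <= b -> al n < p -> q < be n -> Inv q).
    { intros n p q [Hp [m [u [v [K [I1 [I2 [I3 I4]]]]]]]] Hpq Hqb Hn1 Hn2.
      split. lra.
      exists (S m), (fun i => if Nat.ltb i m then u i else p), (fun i => if Nat.ltb i m then v i else q), (Nat.max K (S n)).
      refine (conj _ (conj _ (conj _ _))).
      - intros i Hi. destruct (Nat.ltb_spec i m). destruct (I1 i H) as [? [? ?]]; repeat split; lra. repeat split; lra.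
      - intros i Hi. destruct (Nat.ltb_spec i m); [|lia]. destruct (Nat.ltb_spec (S i) m).
        apply I2; auto. assert (S i = m) by lia. destruct (I1 i H) as [? [? ?]]; lra.
      - simpl. rewrite Nat.ltb_irrefl.
        rewrite (rsum_ext _ (fun i => v i - u i)).
        + pose proof (Phi_jump al be K n p q Hab' Hn1 Hpq Hn2). lra.
        + intros i Hi. destruct (Nat.ltb_spec i m); [reflexivity|lia].
      - simpl. rewrite Nat.ltb_irrefl.
        rewrite (rsum_ext _ (fun i => Rabs (f (v i) - f (u i)))).
        + pose proof (Rabs_pos (f q - f p)). 
          assert (- Rabs (f q - f p) <= f q - f p) by (pose proof (Rabs_le_split_aux := Rle_abs (- (f q - f p))); rewrite Rabs_Ropp in Rabs_le_split_aux; lra).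
          assert (eta * (p - a) <= eta * (q - a)) by (apply Rmult_le_compat_l; lra). lra.
        + intros i Hi. destruct (Nat.ltb_spec i m); [reflexivity|lia]. }
    assert (InvB : Inv b).
    { apply (RI Inv a b Hab Inv_a). intros t Ht.
      destruct (classic (N t)) as [HNt|HNt].
      - destruct (Hcov t HNt) as [n [Hn1 Hn2]].
        exists (Rmin (t - al n) (be n - t)). split. apply Rmin_pos; lra.
        intros p q Hp1 Hp2 Hq1 Hq2 Hp3 Hq3 Ip.
        pose proof (Rmin_l (t - al n) (be n - t)). pose proof (Rmin_r (t - al n) (be n - t)).
        apply (Jump n p q Ip); lra.
      - destruct (Hder t Ht HNt) as [d [Dd Hd]].
        destruct (deriv_local f t d eta Dd Heta) as [rho1 [Hr1 Hloc]].
        set (C := Rabs d + eta + 1).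
        assert (HC : 0 < C) by (unfold C; pose proof (Rabs_pos d); lra).
        set (mg := Rmin gap (L - L')).
        assert (Hmg : 0 < mg) by (unfold mg, gap; apply Rmin_pos; lra).
        exists (Rmin rho1 (mg / C)). split. apply Rmin_pos; auto. apply Rdiv_lt_0_compat; auto.
        assert (Hcont : forall y, Rabs (y - t) < Rmin rho1 (mg / C) -> Rabs (f y - f t) < mg).
        { intros y Hy. pose proof (Rmin_l rho1 (mg / C)). pose proof (Rmin_r rho1 (mg / C)).
          specialize (Hloc y ltac:(lra)).
          assert (Rabs (f y - f t) <= (Rabs d + eta) * Rabs (y - t)).
          { replace (f y - f t) with ((f y - f t - d * (y - t)) + d * (y - t)) by ring.
            eapply Rle_trans. apply Rabs_triang. rewrite Rabs_mult. lra. }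
          assert ((Rabs d + eta) * Rabs (y - t) <= C * Rabs (y - t)) by (apply Rmult_le_compat_r; [apply Rabs_pos| unfold C; lra]).
          assert (C * Rabs (y - t) < C * (mg / C)) by (apply Rmult_lt_compat_l; lra).
          replace (C * (mg / C)) with mg in * by (field; lra). lra. }
        intros p q Hp1 Hp2 Hq1 Hq2 Hp3 Hq3 Ip.
        assert (Hpt : Rabs (p - t) < Rmin rho1 (mg / C)) by (rewrite Rabs_left1 by lra; lra).
        assert (Hqt : Rabs (q - t) < Rmin rho1 (mg / C)) by (rewrite Rabs_right by lra; lra).
        assert (mg <= gap) by apply Rmin_l. assert (mg <= L - L') by apply Rmin_r.
        pose proof (abs_lt_split _ _ (Hcont p Hpt)). pose proof (abs_lt_split _ _ (Hcont q Hqt)).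
        pose proof (Inv_gap p Ip).
        destruct (Rlt_le_dec (f t) L) as [HfL|HfL].
        + assert (Hd0 : 0 <= d) by (apply Hd; lra).
          destruct Ip as [_ [m [u [v [K [I1 [I2 [I3 I4]]]]]]]].
          split. lra. exists m, u, v, K. refine (conj _ (conj _ (conj _ _))).
          * intros i Hi; destruct (I1 i Hi) as [? [? ?]]; repeat split; lra.
          * auto.
          * pose proof (Phi_mono_t al be K p q ltac:(lra)). lra.
          * pose proof (Rmin_l rho1 (mg / C)).
            pose proof (abs_split _ _ (Hloc p ltac:(lra))) as Hlp. pose proof (abs_split _ _ (Hloc q ltac:(lra))) as Hlq.
            rewrite Rabs_left1 in Hlp by lra. rewrite Rabs_right in Hlq by lra.
            assert (d * (q - t) >= 0) by (apply Rle_ge; apply Rmult_le_pos; lra).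
            assert (d * (t - p) >= 0) by (apply Rle_ge; apply Rmult_le_pos; lra).
            assert (eta * (q - a) = eta * (p - a) + eta * (t - p) + eta * (q - t)) by ring.
            lra.
        + split. lra. exists 0%nat, (fun _ => 0), (fun _ => 0), 0%nat. simpl. repeat split; try (intros; lia).
          unfold Phi; simpl; lra.
          assert (0 <= eta * (q - a)) by (apply Rmult_le_pos; lra). lra. }
    apply Inv_val in InvB. exact InvB. }
  destruct (Rle_lt_dec M (f b)) as [H|H]; [exact H|exfalso].
  set (eta := Rmin ((M - L0) / (4 * (b - a + 1))) ((M - f b) / (2 * (b - a + 1)))).
  assert (Heta : 0 < eta) by (unfold eta; apply Rmin_pos; apply Rdiv_lt_0_compat; lra).
  assert (E1 : eta * (b - a + 1) <= (M - L0) / 4).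
  { apply Rle_trans with ((M - L0) / (4 * (b - a + 1)) * (b - a + 1)). apply Rmult_le_compat_r. lra. apply Rmin_l. right; field; lra. }
  assert (E2 : eta * (b - a + 1) <= (M - f b) / 2).
  { apply Rle_trans with ((M - f b) / (2 * (b - a + 1)) * (b - a + 1)). apply Rmult_le_compat_r. lra. apply Rmin_r. right; field; lra. }
  specialize (Claim eta Heta ltac:(lra)). lra.
Qed.
Lemma smal e a c : 0 <= a -> e <= c -> e * a <= c * a.
Proof. intros; apply Rmult_le_compat_r; auto. Qed.
Lemma pos2 a b : 0 <= a -> 0 <= b -> 0 <= a * b.
Proof. intros; apply Rmult_le_pos; auto. Qed.
Lemma ineq1 e x y z dx dy dz : 0 < e -> e <= 1/100 -> 0 <= x -> 0 <= y -> 0 <= z ->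
  Rabs dx <= e * (x + y + z) -> dy + y <= e * (x + z) -> dz - z >= - e * (x + y) ->
  2 * e * (x + z) < y -> dy - 2 * e * (dx + dz) <= 0.
Proof.
  intros He He1 Hx Hy Hz Hdx Hdy Hdz Hw.
  assert (Hdx' : - (e * (x + y + z)) <= dx) by (unfold Rabs in Hdx; destruct Rcase_abs in Hdx; lra).
  assert (A1 : - 2 * e * dx <= 2 * e * (e * (x + y + z))) by nra.
  assert (A2 : - 2 * e * dz <= - 2 * e * z + 2 * e * (e * (x + y))) by nra.
  assert (A0 : 0 < 1 - 4 * e * e) by nra.
  assert (A3 : y * (1 - 4 * e * e) >= 2 * e * (x + z) * (1 - 4 * e * e)) by (apply Rle_ge, Rmult_le_compat_r; lra).
  assert (B5 : 0 <= e * x) by (apply pos2; lra). assert (B6 : 0 <= e * z) by (apply pos2; lra).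
  assert (B7 : 0 <= e * (e * y)) by (apply pos2; [lra|apply pos2; lra]).
  assert (B1 := smal e (e * x) (1/100) B5 He1).
  assert (B2 := smal e (e * z) (1/100) B6 He1).
  assert (B1' : 0 <= e * (e * x)) by (apply pos2; lra).
  assert (B2' : 0 <= e * (e * z)) by (apply pos2; lra).
  assert (B3 := smal e (e * (e * x)) (1/100) B1' He1).
  assert (B4 := smal e (e * (e * z)) (1/100) B2' He1).
  lra.
Qed.
Ltac smalls e x := 
  let h1 := fresh in let h2 := fresh in let h3 := fresh in let h4 := fresh in let h5 := fresh in
  assert (h1 : 0 <= e * x) by (apply pos2; lra);
  assert (h2 : 0 <= e * (e * x)) by (apply pos2; lra);
  assert (h3 := smal e x (1/100) ltac:(lra) ltac:(lra));
  assert (h4 := smal e (e * x) (1/100) h1 ltac:(lra));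
  assert (h5 := smal e (e * (e * x)) (1/100) h2 ltac:(lra)).

Lemma ineq2 e x y z dx dz : 0 < e -> e <= 1/100 -> 0 <= x -> 0 <= y -> 0 <= z ->
  Rabs dx <= e * (x + y + z) -> dz - z >= - e * (x + y) ->
  y <= 2 * e * (x + z) -> 8 * e * x < z -> 0 <= dz - 8 * e * dx.
Proof.
  intros He He1 Hx Hy Hz Hdx Hdz Hy2 Hv.
  assert (Hdx' : dx <= e * (x + y + z)) by (unfold Rabs in Hdx; destruct Rcase_abs in Hdx; lra).
  assert (A1 : e * dx <= e * (e * (x + y + z))) by (apply Rmult_le_compat_l; lra).
  assert (A2 : e * y <= e * (2 * e * (x + z))) by (apply Rmult_le_compat_l; lra).
  assert (A3 : e * (e * y) <= e * (e * (2 * e * (x + z)))) by (apply Rmult_le_compat_l; [lra|apply Rmult_le_compat_l; lra]).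
  smalls e x. smalls e z.
  lra.
Qed.
Lemma ineq3 e x y z dx dz : 0 < e -> e <= 1/100 -> 0 <= x -> 0 <= y -> 0 <= z ->
  Rabs dx <= e * (x + y + z) -> dz - z >= - e * (x + y) ->
  y <= 2 * e * (x + z) -> - (x - 4 * e * z) / 4 + dx - 4 * e * dz <= 0.
Proof.
  intros He He1 Hx Hy Hz Hdx Hdz Hy2.
  assert (Hdx' : dx <= e * (x + y + z)) by (unfold Rabs in Hdx; destruct Rcase_abs in Hdx; lra).
  assert (A1 : e * (dz - z) >= e * (- e * (x + y))) by (apply Rle_ge, Rmult_le_compat_l; lra).
  assert (A2 : e * y <= e * (2 * e * (x + z))) by (apply Rmult_le_compat_l; lra).
  assert (A3 : e * (e * y) <= e * (e * (2 * e * (x + z)))) by (apply Rmult_le_compat_l; [lra|apply Rmult_le_compat_l; lra]).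
  smalls e x. smalls e z.
  lra.
Qed.
Lemma ineq4 e x y z dz : 0 < e -> e <= 1/100 -> 0 <= x -> 0 <= y -> 0 <= z ->
  dz - z >= - e * (x + y) ->
  y <= 2 * e * (x + z) -> 8 * e * x < z -> 0 <= dz - z / 2.
Proof.
  intros He He1 Hx Hy Hz Hdz Hy2 Hv.
  assert (A2 : e * y <= e * (2 * e * (x + z))) by (apply Rmult_le_compat_l; lra).
  smalls e x. smalls e z.
  lra.
Qed.

Theorem lemmaB1 :
  exists eps0 c : R, 0 < eps0 /\ 0 < c /\
  forall (x y z : R -> R) (eps : R),
    abs_continuous_nonpos x ->
    abs_continuous_nonpos y ->
    abs_continuous_nonpos z ->
    (forall s, s <= 0 -> 0 <= x s /\ 0 <= y s /\ 0 <= z s) ->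
    (forall s, s <= 0 -> 0 < x s + y s + z s) ->
    liminf_minfty y 0 ->
    0 < eps ->
    (exists N : R -> Prop, null_set N /\
       forall s, s <= 0 -> ~ N s ->
         exists dx dy dz : R,
           derivable_pt_lim x s dx /\ derivable_pt_lim y s dy /\
           derivable_pt_lim z s dz /\
           Rabs dx <= eps * (x s + y s + z s) /\
           dy + y s <= eps * (x s + z s) /\
           dz - z s >= - eps * (x s + y s)) ->
    eps <= eps0 ->
    (forall s, s <= 0 -> y s <= 2 * eps * (x s + z s)) /\
    ((exists sstar, sstar <= 0 /\
        forall s, s <= sstar -> z s <= 8 * eps * x s) \/
     (forall s, s <= 0 -> x s <= c * eps * z s)).
Proof.
  exists (1/100), 4. split; [lra|]. split; [lra|].
  intros x y z eps ACx ACy ACz Hnn Hpos Hlim Heps [N [HN Hder]] He0.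
  assert (Hy : forall s, s <= 0 -> y s <= 2 * eps * (x s + z s)).
  { intros s0 Hs0. apply Rnot_lt_le; intro Hw.
    set (w0 := y s0 - 2 * eps * (x s0 + z s0)).
    assert (Hw0 : 0 < w0) by (unfold w0; lra).
    destruct Hlim as [Hl1 _].
    destruct (Hl1 (w0 / 2) ltac:(lra) s0) as [s [Hss0 Hys]].
    set (f := fun t => (-1) * y t + (2 * eps) * (1 * x t + 1 * z t)).
    assert (Hs : s <= 0) by lra.
    destruct (Hnn s Hs) as [Hxs [Hys' Hzs]].
    assert (Hfs : - (w0 / 2) < f s).
    { unfold f. assert (0 <= eps * (x s + z s)) by (apply Rmult_le_pos; lra). lra. }
    assert (G := GFL f N s s0 (- (w0 / 2) - 1) (- (w0 / 2)) 0 Hss0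
      (AC_lin y _ (-1) (2 * eps) s s0 (ACy s s0 Hss0 Hs0) (AC_lin x z 1 1 s s0 (ACx s s0 Hss0 Hs0) (ACz s s0 Hss0 Hs0)))
      HN ltac:(lra) ltac:(lra) ltac:(lra)).
    assert (Rmin (f s) (- (w0 / 2)) <= f s0).
    { apply G. intros t Ht HNt.
      destruct (Hder t ltac:(lra) HNt) as [dx [dy [dz [Dx [Dy [Dz [I1 [I2 I3]]]]]]]].
      exists ((-1) * dy + (2 * eps) * (1 * dx + 1 * dz)). split.
      - apply dpl_lin; auto. apply dpl_lin; auto.
      - intros _ Hft. destruct (Hnn t ltac:(lra)) as [? [? ?]].
        assert (Hw' : 2 * eps * (x t + z t) < y t) by (unfold f in Hft; lra).
        pose proof (ineq1 eps (x t) (y t) (z t) dx dy dz Heps He0 H H0 H1 I1 I2 I3 Hw'). lra. }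
    unfold Rmin in H. destruct Rle_dec in H; [lra|].
    unfold f, w0 in *. lra. }
  split; [exact Hy|].
  assert (Hv : forall s1 s, s1 <= s -> s <= 0 -> 8 * eps * x s1 < z s1 -> 8 * eps * x s < z s).
  { intros s1 s Hs1 Hs Hv1.
    set (f := fun t => 1 * z t + (- (8 * eps)) * x t).
    assert (G := GFL f N s1 s 0 (f s1) (f s1 + 1) Hs1
      (AC_lin z x 1 (- (8 * eps)) s1 s (ACz s1 s Hs1 Hs) (ACx s1 s Hs1 Hs))
      HN ltac:(unfold f; lra) ltac:(lra) ltac:(unfold f; lra)).
    assert (Rmin (f s1) (f s1) <= f s).
    { apply G. intros t Ht HNt.
      destruct (Hder t ltac:(lra) HNt) as [dx [dy [dz [Dx [Dy [Dz [I1 [I2 I3]]]]]]]].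
      exists (1 * dz + (- (8 * eps)) * dx). split.
      - apply dpl_lin; auto.
      - intros Hft _. destruct (Hnn t ltac:(lra)) as [? [? ?]].
        assert (Hv' : 8 * eps * x t < z t) by (unfold f in Hft; lra).
        pose proof (ineq2 eps (x t) (y t) (z t) dx dz Heps He0 H H0 H1 I1 I3 (Hy t ltac:(lra)) Hv'). lra. }
    unfold Rmin in H. destruct Rle_dec in H; unfold f in *; lra. }
  destruct (classic (exists sstar, sstar <= 0 /\ forall s, s <= sstar -> z s <= 8 * eps * x s)) as [Hc|Hc];
    [left; exact Hc|right].
  assert (Hall : forall t, t <= 0 -> 8 * eps * x t < z t).
  { intros t Ht. apply NNPP; intro Hc'. apply Hc. exists t. split; auto.
    intros s Hs. apply Rnot_lt_le. intro Hzs. apply Hc'. apply (Hv s t); lra. }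
  intros s0 Hs0. apply Rnot_lt_le; intro Hx0.
  set (g := fun t => 1 * x t + (- (4 * eps)) * z t).
  set (F1 := fun t => exp ((- (1/4)) * t) * g t).
  set (F2 := fun t => exp ((- (1/2)) * t) * z t).
  set (P := F1 s0). set (Q := F2 s0).
  destruct (Hnn s0 Hs0) as [Hx0' [Hy0' Hz0']].
  assert (HP : 0 < P) by (unfold P, F1, g; apply Rmult_lt_0_compat; [apply exp_pos|lra]).
  assert (HQ : 0 < Q).
  { unfold Q, F2; apply Rmult_lt_0_compat; [apply exp_pos|]. pose proof (Hall s0 Hs0).
    assert (0 <= eps * x s0) by (apply Rmult_le_pos; lra). lra. }
  assert (Pb : forall s, s <= s0 -> P <= F1 s).
  { intros s Hs. set (f := fun t => (-1) * F1 t + 0 * F1 t).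
    assert (ACF : abs_continuous_on F1 s s0).
    { apply AC_expmul. lra. apply AC_lin; [apply ACx|apply ACz]; lra. }
    assert (G := GFL f N s s0 (f s - 1) (f s) (f s + 1) Hs (AC_lin F1 F1 (-1) 0 s s0 ACF ACF)
      HN ltac:(lra) ltac:(lra) ltac:(lra)).
    assert (Rmin (f s) (f s) <= f s0).
    { apply G. intros t Ht HNt.
      destruct (Hder t ltac:(lra) HNt) as [dx [dy [dz [Dx [Dy [Dz [I1 [I2 I3]]]]]]]].
      set (dg := 1 * dx + (- (4 * eps)) * dz).
      set (dF := (- (1/4)) * exp ((- (1/4)) * t) * g t + exp ((- (1/4)) * t) * dg).
      assert (DF : derivable_pt_lim F1 t dF).
      { assert (D1 := derivable_pt_lim_mult _ _ t _ _ (dpl_expk (- (1/4)) t) (dpl_lin x z t dx dz 1 (- (4 * eps)) Dx Dz)).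
        exact D1. }
      exists ((-1) * dF + 0 * dF). split.
      - apply dpl_lin; auto.
      - intros _ _. destruct (Hnn t ltac:(lra)) as [? [? ?]].
        pose proof (ineq3 eps (x t) (y t) (z t) dx dz Heps He0 H H0 H1 I1 I3 (Hy t ltac:(lra))) as Hi.
        assert (dF = exp ((- (1/4)) * t) * (- (x t - 4 * eps * z t) / 4 + dx - 4 * eps * dz)) by (unfold dF, dg, g; field).
        assert (dF <= 0).
        { rewrite H2. replace 0 with (exp ((- (1/4)) * t) * 0) by ring. apply Rmult_le_compat_l. left; apply exp_pos. lra. }
        lra. }
    unfold Rmin in H. destruct Rle_dec in H; unfold f, P in *; lra. }
  assert (Qb : forall s, s <= s0 -> F2 s <= Q).
  { intros s Hs. set (f := fun t => 1 * F2 t + 0 * F2 t).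
    assert (ACF : abs_continuous_on F2 s s0) by (apply AC_expmul; [lra|apply ACz; lra]).
    assert (G := GFL f N s s0 (f s - 1) (f s) (f s + 1) Hs (AC_lin F2 F2 1 0 s s0 ACF ACF)
      HN ltac:(lra) ltac:(lra) ltac:(lra)).
    assert (Rmin (f s) (f s) <= f s0).
    { apply G. intros t Ht HNt.
      destruct (Hder t ltac:(lra) HNt) as [dx [dy [dz [Dx [Dy [Dz [I1 [I2 I3]]]]]]]].
      set (dF := (- (1/2)) * exp ((- (1/2)) * t) * z t + exp ((- (1/2)) * t) * dz).
      assert (DF : derivable_pt_lim F2 t dF).
      { exact (derivable_pt_lim_mult _ _ t _ _ (dpl_expk (- (1/2)) t) Dz). }
      exists (1 * dF + 0 * dF). split.
      - apply dpl_lin; auto.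
      - intros _ _. destruct (Hnn t ltac:(lra)) as [? [? ?]].
        pose proof (ineq4 eps (x t) (y t) (z t) dz Heps He0 H H0 H1 I3 (Hy t ltac:(lra)) (Hall t ltac:(lra))) as Hi.
        assert (dF = exp ((- (1/2)) * t) * (dz - z t / 2)) by (unfold dF; field).
        assert (0 <= dF).
        { rewrite H2. apply Rmult_le_pos. left; apply exp_pos. lra. }
        lra. }
    unfold Rmin in H. destruct Rle_dec in H; unfold f, Q in *; lra. }
  set (r := 8 * eps * P / Q).
  assert (Hr : 0 < r) by (unfold r; apply Rdiv_lt_0_compat; [apply Rmult_lt_0_compat; lra | lra]).
  set (s := Rmin s0 (4 * ln r)).
  assert (Hs1 : s <= s0) by apply Rmin_l.
  assert (Hs2 : s <= 4 * ln r) by apply Rmin_r.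
  set (E2 := exp ((1/4) * s)).
  assert (HE2 : 0 < E2) by apply exp_pos.
  assert (HE2r : E2 <= r).
  { unfold E2. rewrite <- (exp_ln r Hr). apply exp_le_mono. lra. }
  assert (Hid1 : exp ((- (1/4)) * s) * E2 = 1).
  { unfold E2. rewrite <- exp_plus. transitivity (exp 0); [f_equal; ring | apply exp_0]. }
  assert (Hid2 : exp ((- (1/2)) * s) * (E2 * E2) = 1).
  { unfold E2. rewrite <- !exp_plus. assert (Hz0 : - (1 / 2) * s + (1 / 4 * s + 1 / 4 * s) = 0) by lra. rewrite Hz0. apply exp_0. }
  specialize (Pb s Hs1). specialize (Qb s Hs1). unfold F1, F2 in Pb, Qb.
  assert (A1 : P * E2 <= g s).
  { apply Rle_trans with ((exp ((- (1/4)) * s) * g s) * E2). apply Rmult_le_compat_r; lra.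
    right. replace ((exp ((- (1/4)) * s) * g s) * E2) with ((exp ((- (1/4)) * s) * E2) * g s) by ring. rewrite Hid1; ring. }
  assert (A2 : z s <= Q * (E2 * E2)).
  { apply Rle_trans with ((exp ((- (1/2)) * s) * z s) * (E2 * E2)).
    right. replace ((exp ((- (1/2)) * s) * z s) * (E2 * E2)) with ((exp ((- (1/2)) * s) * (E2 * E2)) * z s) by ring. rewrite Hid2; ring.
    apply Rmult_le_compat_r. nra. lra. }
  assert (Hs0' : s <= 0) by lra.
  destruct (Hnn s Hs0') as [Hxs [Hys Hzs]].
  pose proof (Hall s Hs0') as Hvs.
  assert (A3 : P * E2 <= x s) by (unfold g in A1; assert (0 <= eps * z s) by (apply Rmult_le_pos; lra); lra).
  assert (A4 : 8 * eps * (P * E2) <= 8 * eps * x s) by (apply Rmult_le_compat_l; lra).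
  assert (A5 : Q * (E2 * E2) <= Q * E2 * r) by (replace (Q * E2 * r) with (Q * E2 * r) by ring; 
     replace (Q * (E2 * E2)) with ((Q * E2) * E2) by ring; apply Rmult_le_compat_l; [nra|lra]).
  assert (A6 : Q * E2 * r = 8 * eps * (P * E2)) by (unfold r; field; lra).
  lra.
Qed.
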